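(* For every $n\in\mathbb{N}$ with $n>1$, the monoid $\mathrm{lps}_n$ has exponential growth.
   Context: Let $\mathcal{A}_n=\{1<2<\cdots<n\}$. An lPS tableau is a finite (possibly empty) sequence of nonempty bottom-justified columns of boxes filled with positive integers, such that the entries of each column are strictly decreasing from top to bottom and the bottom entries of the columns form a weakly increasing sequence from left to right. Right insertion of a symbol $a$ into an lPS tableau $B$: if $a$ is greater than or equal to every entry of the bottom row, append a new column consisting of $a$ at the right end; otherwise, let $z$ be the leftmost bottom-row entry with $z>a$ and put $a$ in a new box at the bottom of the column of $z$ (the previous entries of that column move up one box). For $w=w_1\cdots w_k$, $\mathfrak{R}_\ell(w)$ is obtained by starting with the empty tableau and right-inserting $w_1,\dots,w_k$ in order. The monoid $\mathrm{lps}_n$ is the quotient of the free monoid $\mathcal{A}_n^*$ by the congruence $u\equiv v\iff\mathfrak{R}_\ell(u)=\mathfrak{R}_\ell(v)$. For a monoid $M$ generated by a finite set $\Sigma$, the growth function $\gamma_M(N)$ is the number of elements of $M$ expressible as products of at most $N$ generators; $M$ has exponential growth if $\gamma_M$ is bounded below by $k^N$ for some $k$ (up to the usual equivalence of growth functions: $f\preceq g$ iff $f(N)\le g(cN)$ for some constant $c>0$ and all large $N$), a notion independent of the finite generating set. *)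

(* Defs.v *)
From mathcomp Require Import all_boot all_order all_algebra.
From mathcomp Require Import reals.

Set Implicit Arguments.
Unset Strict Implicit.
Unset Printing Implicit Defensive.

(* An lPS tableau is a sequence of columns (left to right); each column is
   stored as a list read from BOTTOM to TOP, so [head 0 c] is the bottom entry
   of column c. *)
Definition column := seq nat.
Definition tableau := seq column.

Fixpoint rins (B : tableau) (a : nat) : tableau :=
  match B with
  | [::] => [:: [:: a]]
  | c :: B' => if a < head 0 c then (a :: c) :: B' else c :: rins B' a
  end.

Definition Rl (w : seq nat) : tableau := foldl rins [::] w.

Fixpoint words (n k : nat) : seq (seq nat) :=
  match k with
  | 0 => [:: [::]]
  | k'.+1 => [seq a :: w | a <- iota 1 n, w <- words n k']
  end.

Definition words_le (n N : nat) : seq (seq nat) :=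
  flatten [seq words n k | k <- iota 0 N.+1].

(* Growth function of lps_n w.r.t. the generating set A_n: the number of
   elements of lps_n = A_n^* / ==, (u == v iff Rl u = Rl v), that are
   products of at most N generators; since the classes are in bijection with
   the tableaux Rl w, this is the number of distinct tableaux Rl w with
   |w| <= N. *)
Definition lps_growth (n N : nat) : nat := size (undup [seq Rl w | w <- words_le n N]).

Definition exponential_growth (R : realType) (gamma : nat -> nat) : Prop :=
  exists (k : R) (c N0 : nat),
    (1 < k)%R /\ (0 < c)%N /\
    forall N, (N0 <= N)%N -> (k ^+ N <= (gamma (c * N)%N)%:R)%R.

(* Main.v *)
Require Import Defs.
From mathcomp Require Import all_boot all_order all_algebra.
From mathcomp Require Import reals.

Set Implicit Arguments.
Unset Strict Implicit.
Unset Printing Implicit Defensive.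
Import GRing.Theory Num.Theory.

Definition col (b : bool) : column := if b then [:: 1; 2] else [:: 1].
Definition enc (bs : seq bool) : seq nat :=
  flatten [seq (if b then [:: 2; 1] else [:: 1]) | b <- bs].

Definition lowB (B : tableau) := all (fun c => head 0 c <= 1) B.

Lemma rins_low (B : tableau) a : lowB B -> 1 <= a -> rins B a = rcons B [:: a].
Proof.
elim: B => [|c B IH] //= /andP[hc hB] ha.
rewrite IH //. have -> : (a < head 0 c) = false.
  by apply/negbTE; rewrite -leqNgt (leq_trans hc ha).
by [].
Qed.

Lemma rins_low2 (B : tableau) : lowB B -> rins (rcons B [:: 2]) 1 = rcons B [:: 1; 2].
Proof.
elim: B => [|c B IH] //= /andP[hc hB].
rewrite IH //. have -> : (1 < head 0 c) = false.
  by apply/negbTE; rewrite -leqNgt.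
by [].
Qed.

Lemma lowB_rcons B c : lowB B -> head 0 c <= 1 -> lowB (rcons B c).
Proof. by move=> h hc; rewrite /lowB all_rcons hc. Qed.

Lemma foldl_enc (B : tableau) bs : lowB B ->
  foldl rins B (enc bs) = B ++ map col bs.
Proof.
elim: bs B => [|b bs IH] B hB /=; first by rewrite cats0.
case: b => /=.
- rewrite (rins_low hB) // rins_low2 // IH; last by apply: lowB_rcons.
  by rewrite cat_rcons.
- rewrite (rins_low hB) // IH; last by apply: lowB_rcons.
  by rewrite cat_rcons.
Qed.

Lemma Rl_enc bs : Rl (enc bs) = map col bs.
Proof. by rewrite /Rl foldl_enc. Qed.

Lemma col_inj : injective col.
Proof. by case; case. Qed.

Lemma mem_words n w : all (fun a => 0 < a <= n) w -> w \in words n (size w).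
Proof.
elim: w => [|a w IH] //= /andP[ha hw].
apply: (allpairs_f (fun a w => a :: w)); last exact: IH.
by rewrite mem_iota add1n ltnS.
Qed.

Lemma size_enc bs : size (enc bs) <= 2 * size bs.
Proof.
elim: bs => [|b bs IH] //=.
rewrite /enc /= size_cat -/(enc bs) mulnS.
by case: b => /=; apply: leq_add.
Qed.

Lemma all_enc n bs : 1 < n -> all (fun a => 0 < a <= n) (enc bs).
Proof.
move=> hn; elim: bs => [|b bs IH] //=.
rewrite /enc /= all_cat -/(enc bs) IH andbT.
by case: b => /=; rewrite ?hn ?(ltnW hn).
Qed.

Lemma growth_lb n N : 1 < n -> 2 ^ N <= lps_growth n (2 * N).
Proof.
move=> hn.
pose s := [seq map col (tval t) | t <- enum {: N.-tuple bool}].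
have us : uniq s.
  rewrite map_inj_uniq ?enum_uniq //.
  by move=> t1 t2 /(inj_map col_inj) h; apply: val_inj.
have -> : 2 ^ N = size s by rewrite size_map -cardE card_tuple card_bool.
rewrite /lps_growth; apply: uniq_leq_size => // x /mapP[t _ ->].
rewrite mem_undup; apply/mapP; exists (enc t); last by rewrite Rl_enc.
rewrite /words_le; apply/flatten_mapP; exists (size (enc t)).
  by rewrite mem_iota add0n ltnS; have := size_enc t; rewrite size_tuple.
exact/mem_words/all_enc.
Qed.

Theorem corollary4p2 (R : realType) (n : nat) :
  (1 < n)%N -> exponential_growth R (lps_growth n).
Proof.
move=> hn; exists (2%:R)%R, 2, 0; split; first by rewrite ltr1n.
split=> // N _.
by rewrite -natrX ler_nat; apply: growth_lb.
Qed.
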